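(* Let $R$ be a semiprime left Goldie ring, let $\mathcal{C}$ be the set of regular elements of $R$, write its classical left quotient ring as $Q_{l,cl}(R)=\prod_{i=1}^nQ_i$ with $Q_1,\ldots,Q_n$ simple Artinian rings, and let $\sigma:R\to Q_{l,cl}(R)$, $r\mapsto\frac{r}{1}$. Then: (1) $\mathcal{C}\subseteq S$ for all $S\in\max\mathrm{Den}_l(R)$; (2) $\max\mathrm{Den}_l(R)=\{S_1,\ldots,S_n\}$ and $\max\mathrm{Den}_l(Q_{l,cl}(R))=\{S_1',\ldots,S_n'\}$, where $S_i':=Q_1\times\cdots\times Q_i^*\times\cdots\times Q_n$ ($Q_i^*$ the group of units of $Q_i$, in the $i$-th place) and $S_i:=\sigma^{-1}(S_i')$; the map $\max\mathrm{Den}_l(R)\to\max\mathrm{Den}_l(Q_{l,cl}(R))$, $S\mapsto\widetilde{S}$, is a bijection with inverse $\mathcal{T}\mapsto\sigma^{-1}(\mathcal{T})$, where $\widetilde{S}$ is the multiplicative monoid generated in $Q_{l,cl}(R)$ by $\sigma(S)$ and $\{c^{-1}:c\in\mathcal{C}\}$; (3) $S_i^{-1}R\cong Q_i$ for $i=1,\ldots,n$.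
   Context: All rings are associative with $1$. A multiplicative subset $S$ of $R$ ($1\in S$, $0\notin S$, closed under multiplication) is a left Ore set if $Sr\cap Rs\neq\emptyset$ for all $r\in R$, $s\in S$. A left Ore set $S$ is a left denominator set if $rs=0$ ($r\in R$, $s\in S$) implies $tr=0$ for some $t\in S$; $S^{-1}R$ is the left localization. $\max\mathrm{Den}_l(R)$ is the set of maximal elements, under inclusion, of the set of left denominator sets of $R$. The classical left quotient ring is $Q_{l,cl}(R):=\mathcal{C}^{-1}R$ (which exists and is semisimple Artinian for semiprime left Goldie $R$ by Goldie's theorem). *)

(* Defs.v *)
(* Rings are possibly non-commutative, associative with 1
   (pzRingType: the zero ring is allowed). Subsets are Prop-valued predicates. *)
From mathcomp Require Import all_boot all_algebra.
Set Implicit Arguments. Unset Strict Implicit. Unset Printing Implicit Defensive.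
Import GRing.Theory.
Local Open Scope ring_scope.

Section RingNotions.
Variable R : pzRingType.

Definition is_unit (x : R) : Prop := exists y : R, x * y = 1 /\ y * x = 1.

Definition regular (c : R) : Prop :=
  (forall r : R, c * r = 0 -> r = 0) /\ (forall r : R, r * c = 0 -> r = 0).

Definition mult_subset (S : R -> Prop) : Prop :=
  S 1 /\ ~ S 0 /\ (forall a b, S a -> S b -> S (a * b)).

Definition left_Ore (S : R -> Prop) : Prop :=
  mult_subset S /\
  forall r s : R, S s -> exists s' r' : R, S s' /\ s' * r = r' * s.

Definition left_den (S : R -> Prop) : Prop :=
  left_Ore S /\
  forall r s : R, S s -> r * s = 0 -> exists t : R, S t /\ t * r = 0.

Definition maxDen_l (S : R -> Prop) : Prop :=
  left_den S /\
  forall T : R -> Prop, left_den T -> (forall x, S x -> T x) -> forall x, T x -> S x.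

Definition same_subset (A B : R -> Prop) : Prop := forall x, A x <-> B x.

Definition left_ideal (I : R -> Prop) : Prop :=
  I 0 /\ (forall a b, I a -> I b -> I (a - b)) /\ (forall r a, I a -> I (r * a)).

Definition ideal (I : R -> Prop) : Prop :=
  left_ideal I /\ (forall r a, I a -> I (a * r)).

Definition semiprime : Prop :=
  forall I : R -> Prop, ideal I -> (forall a b, I a -> I b -> a * b = 0) ->
  forall a, I a -> a = 0.

Definition left_ann (X : R -> Prop) : R -> Prop :=
  fun r => forall x, X x -> r * x = 0.

Definition acc_left_ann : Prop :=
  forall X : nat -> R -> Prop,
  (forall m x, left_ann (X m) x -> left_ann (X m.+1) x) ->
  exists N, forall m, (N <= m)%N -> same_subset (left_ann (X m)) (left_ann (X N)).

(* finite left uniform dimension: no infinite direct sum of nonzero left ideals *)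
Definition finite_left_udim : Prop :=
  ~ exists I : nat -> R -> Prop,
      (forall j, left_ideal (I j)) /\
      (forall j, exists a, I j a /\ a <> 0) /\
      (forall (k : nat) (a : nat -> R), (forall j, I j (a j)) ->
         \sum_(j < k) a j = 0 -> forall j, (j < k)%N -> a j = 0).

Definition left_Goldie : Prop := acc_left_ann /\ finite_left_udim.

Definition simple_ring : Prop :=
  (1 : R) <> 0 /\
  forall I : R -> Prop, ideal I -> (forall a, I a -> a = 0) \/ (forall a, I a).

Definition left_Artinian : Prop :=
  forall I : nat -> R -> Prop, (forall m, left_ideal (I m)) ->
  (forall m x, I m.+1 x -> I m x) ->
  exists N, forall m, (N <= m)%N -> same_subset (I m) (I N).

Definition simple_Artinian : Prop := simple_ring /\ left_Artinian.

End RingNotions.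

(* f : R -> L is a left ring of fractions of R w.r.t. S, i.e. L "is" S^{-1}R
   (with f r = r/1): standard characterization of the left localization. *)
Definition is_left_localization (R L : pzRingType) (S : R -> Prop)
  (f : {rmorphism R -> L}) : Prop :=
  (forall s, S s -> is_unit (f s)) /\
  (forall q : L, exists s r : R, S s /\ f s * q = f r) /\
  (forall r : R, f r = 0 <-> exists s, S s /\ s * r = 0).

Definition is_classical_left_quotient (R Q : pzRingType)
  (sigma : {rmorphism R -> Q}) : Prop :=
  is_left_localization (@regular R) sigma.

Definition ring_iso_prod (Q : pzRingType) (n : nat) (Qi : 'I_n -> pzRingType)
  (phi : Q -> forall i, Qi i) : Prop :=
  (forall a b i, phi (a + b) i = phi a i + phi b i) /\
  (forall a b i, phi (a * b) i = phi a i * phi b i) /\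
  (forall i, phi 1 i = 1) /\
  (forall a b, (forall i, phi a i = phi b i) -> a = b) /\
  (forall g : forall i, Qi i, exists a, forall i, phi a i = g i).

Inductive gen_monoid (Q : pzRingType) (X : Q -> Prop) : Q -> Prop :=
  | gm_one : gen_monoid X 1
  | gm_mul : forall x y, X x -> gen_monoid X y -> gen_monoid X (x * y).

Definition tilde (R Q : pzRingType) (sigma : {rmorphism R -> Q}) (S : R -> Prop)
  : Q -> Prop :=
  gen_monoid (fun q => (exists s, S s /\ q = sigma s) \/
                       (exists c, regular c /\ q * sigma c = 1 /\ sigma c * q = 1)).

Definition preimage_of (R Q : pzRingType) (sigma : {rmorphism R -> Q}) (T : Q -> Prop)
  : R -> Prop := fun r => T (sigma r).

(* Main.v *)
From HB Require Import structures.
Require Import Defs.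
From mathcomp Require Import all_boot all_algebra.
From Stdlib Require Import ClassicalEpsilon Classical.
Set Implicit Arguments. Unset Strict Implicit. Unset Printing Implicit Defensive.
Import GRing.Theory.
Local Open Scope ring_scope.

Section Gen.
Variable B : pzRingType.

Lemma unit_mul (a b : B) : is_unit a -> is_unit b -> is_unit (a * b).
Proof.
move=> [x [h1 h2]] [y [h3 h4]]; exists (y * x); split.
  by rewrite mulrA -(mulrA a) h3 mulr1.
by rewrite mulrA -(mulrA y) h2 mulr1.
Qed.

Lemma unit_canl (a x : B) : is_unit a -> a * x = 0 -> x = 0.
Proof. by move=> [y [h1 h2]] h; rewrite -[x]mul1r -h2 -mulrA h mulr0. Qed.

Lemma unit_canr (a x : B) : is_unit a -> x * a = 0 -> x = 0.
Proof. by move=> [y [h1 h2]] h; rewrite -[x]mulr1 -h1 mulrA h mul0r. Qed.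

Lemma unit1 : is_unit (1 : B). Proof. by exists 1; rewrite mulr1. Qed.

Lemma not_unit0 : (1 : B) <> 0 -> ~ is_unit (0 : B).
Proof. by move=> h [y [h1 _]]; apply: h; rewrite -h1 mul0r. Qed.

Lemma den_same (A C : B -> Prop) : same_subset A C -> left_den A -> left_den C.
Proof.
move=> E [[[h1 [h0 hM]] hO] hD]; split; first split; first split.
- by apply/E.
- by split; [move/E|move=> a b /E ha /E hb; apply/E; apply: hM].
- move=> r s /E /(hO r) [s' [r' [hs' e]]]; exists s', r'; split=> //; exact/E.
- move=> r s /E hs /(hD r s hs) [t [ht e]]; exists t; split=> //; exact/E.
Qed.

Lemma rreg_exp (x r : B) k : (forall r, r * x = 0 -> r = 0) -> r * x ^+ k = 0 -> r = 0.
Proof.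
move=> hx; elim: k r => [|k IH] r; first by rewrite expr0 mulr1.
by rewrite exprSr mulrA => /hx /IH.
Qed.

Lemma artin_unit (x : B) : left_Artinian B -> (forall r, r * x = 0 -> r = 0) -> is_unit x.
Proof.
move=> hA hx.
pose I m := fun y : B => exists z, y = z * x ^+ m.
have [|m x0 [z ->]|N hN] := hA I.
- move=> m; split; first by exists 0; rewrite mul0r.
  split; first by move=> a b [z1 ->] [z2 ->]; exists (z1 - z2); rewrite mulrBl.
  by move=> r a [z ->]; exists (r * z); rewrite mulrA.
- by exists (z * x); rewrite exprS mulrA.
have [y e] : I N.+1 (x ^+ N) by apply/(hN N.+1 (leqnSn N)); exists 1; rewrite mul1r.
have yx : y * x = 1.
  have h : (1 - y * x) * x ^+ N = 0 by rewrite mulrBl mul1r -mulrA -exprS -e subrr.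
  by have /eqP := rreg_exp hx h; rewrite subr_eq0 => /eqP.
exists y; split=> //.
apply/eqP; rewrite -subr_eq0; apply/eqP; apply: hx.
by rewrite mulrBl mul1r -mulrA yx mulr1 subrr.
Qed.

End Gen.


Section Prod.
Variables (Q : pzRingType) (n : nat) (Qi : 'I_n -> pzRingType).
Variable phi : Q -> forall i, Qi i.
Variable Hphi : ring_iso_prod phi.
Variable HQi : forall i, simple_Artinian (Qi i).

Lemma phiD a b i : phi (a + b) i = phi a i + phi b i.
Proof. by case: Hphi. Qed.
Lemma phiM a b i : phi (a * b) i = phi a i * phi b i.
Proof. by case: Hphi => _ []. Qed.
Lemma phi1 i : phi 1 i = 1.
Proof. by case: Hphi => _ [_ []]. Qed.
Lemma phi_inj a b : (forall i, phi a i = phi b i) -> a = b.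
Proof. by case: Hphi => _ [_ [_ [h _]]]; apply: h. Qed.
Lemma phi_surj (g : forall i, Qi i) : exists a, forall i, phi a i = g i.
Proof. by case: Hphi => _ [_ [_ [_ h]]]; apply: h. Qed.
Lemma phi0 i : phi 0 i = 0.
Proof.
have h := phiD 0 0 i; rewrite addr0 in h.
by have := congr1 (fun y => y - phi 0 i) h; rewrite addrK subrr.
Qed.
Lemma phiB a b i : phi (a - b) i = phi a i - phi b i.
Proof. by rewrite -{2}(subrK b a) (phiD (a - b)) addrK. Qed.

Lemma Qi_nz i : (1 : Qi i) <> 0.
Proof. by case: (HQi i) => [[]]. Qed.

Definition at_i (i : 'I_n) (x : Qi i) (j : 'I_n) : Qi j :=
  match i =P j with ReflectT e => eq_rect i Qi x j e | ReflectF _ => 0 end.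

Lemma at_i_eq i x : @at_i i x i = x.
Proof. by rewrite /at_i; case: (i =P i) => // e; rewrite (eq_axiomK e). Qed.

Lemma at_i_neq i j x : j != i -> @at_i i x j = 0.
Proof. by rewrite /at_i eq_sym; case: (i =P j) => // ->; rewrite eqxx. Qed.

Definition lift_at i (x : Qi i) : Q := proj1_sig (constructive_indefinite_description _ (phi_surj (at_i x))).

Lemma lift_at_eq i x : phi (lift_at x) i = x.
Proof. by rewrite /lift_at (proj2_sig (constructive_indefinite_description _ (phi_surj (at_i x)))) at_i_eq. Qed.

Lemma lift_at_neq i j x : j != i -> phi (@lift_at i x) j = 0.
Proof. by move=> h; rewrite /lift_at (proj2_sig (constructive_indefinite_description _ (phi_surj (at_i x)))) at_i_neq. Qed.

Lemma unit_comp q i : is_unit q -> is_unit (phi q i).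
Proof. by move=> [y [h1 h2]]; exists (phi y i); rewrite -!phiM h1 h2 phi1. Qed.

Lemma phi_eq0 q : (forall i, phi q i = 0) -> q = 0.
Proof. by move=> h; apply: phi_inj => i; rewrite h phi0. Qed.

End Prod.


Section Loc.
Variables (Q : pzRingType) (n : nat) (Qi : 'I_n -> pzRingType).
Variable phi : Q -> forall i, Qi i.
Variable Hphi : ring_iso_prod phi.
Variable HQi : forall i, simple_Artinian (Qi i).
Variables (A : pzRingType) (s : {rmorphism A -> Q}) (D : A -> Prop).
Hypothesis hD1 : D 1.
Hypothesis hDM : forall a b, D a -> D b -> D (a * b).
Hypothesis hDu : forall c, D c -> is_unit (s c).
Hypothesis hfrac : forall q, exists c a, D c /\ s c * q = s a.
Hypothesis hinj : forall a, s a = 0 -> a = 0.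

Definition SA i (a : A) : Prop := is_unit (phi (s a) i).

Lemma pM i a b : phi (s (a * b)) i = phi (s a) i * phi (s b) i.
Proof. by rewrite rmorphM (phiM Hphi). Qed.
Lemma p1 i : phi (s 1) i = 1.
Proof. by rewrite rmorph1 (phi1 Hphi). Qed.
Lemma pO i (x y x' y' : A) : x * y = x' * y' -> forall w,
  phi (s x) i * (phi (s y) i * w) = phi (s x') i * (phi (s y') i * w).
Proof. by move=> e w; rewrite !mulrA -!pM e. Qed.
Lemma pD i c : D c -> is_unit (phi (s c) i).
Proof. by move=> /hDu /(unit_comp Hphi). Qed.

Lemma kill i r : phi (s r) i = 0 -> exists b, SA i b /\ b * r = 0.
Proof.
move=> hr; have [d [b [Dd eb]]] := hfrac (lift_at Hphi (1 : Qi i)).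
exists b; split.
  by rewrite /SA -eb (phiM Hphi) lift_at_eq mulr1; apply: pD.
apply: hinj; apply: (phi_eq0 Hphi) => j.
rewrite rmorphM -eb !(phiM Hphi); case: (eqVneq j i) => [->|ne].
  by rewrite hr mulr0.
by rewrite lift_at_neq // mulr0 mul0r.
Qed.

Lemma SA_den i : left_den (SA i).
Proof.
split; first split; first split.
- by rewrite /SA p1; apply: unit1.
- split; first by rewrite /SA rmorph0 (phi0 Hphi); apply: not_unit0; apply: Qi_nz.
  by move=> a b ha hb; rewrite /SA pM; apply: unit_mul.
- move=> r s0 [v [hv1 hv2]].
  have [c [a [Dc ea]]] := hfrac (lift_at Hphi (phi (s r) i * v)).
  have [d [b [Dd eb]]] := hfrac (s c * lift_at Hphi (1 : Qi i)).
  have ez : lift_at Hphi (1 : Qi i) * s r = lift_at Hphi (phi (s r) i * v) * s s0.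
    apply: (phi_inj Hphi) => j; rewrite !(phiM Hphi).
    case: (eqVneq j i) => [->|ne]; first by rewrite !lift_at_eq mul1r -mulrA hv2 mulr1.
    by rewrite !lift_at_neq // !mul0r.
  exists b, (d * a); split.
    by rewrite /SA -eb !(phiM Hphi) lift_at_eq mulr1; apply: unit_mul; apply: pD.
  apply/eqP; rewrite -subr_eq0; apply/eqP; apply: hinj.
  by rewrite rmorphB !rmorphM -eb -ea -!mulrA ez subrr.
- move=> r s0 hs hrs; apply: kill.
  by apply: (unit_canr hs); rewrite -pM hrs rmorph0 (phi0 Hphi).
Qed.

Lemma SA_incl i j : (forall a, SA i a -> SA j a) -> i = j.
Proof.
move=> h; case: (eqVneq i j) => // ne.
have [d [b [Dd eb]]] := hfrac (lift_at Hphi (1 : Qi i)).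
have hi : SA i b by rewrite /SA -eb (phiM Hphi) lift_at_eq mulr1; apply: pD.
have := h b hi; rewrite /SA -eb (phiM Hphi) lift_at_neq 1?eq_sym // mulr0.
by move/(not_unit0 (Qi_nz HQi (i:=j))).
Qed.


Lemma good_unit i (T : A -> Prop) : left_den T ->
  (forall t, T t -> phi (s t) i <> 0) -> forall t, T t -> SA i t.
Proof.
move=> [[[T1 [T0 TM]] TO] TD] hi.
pose I := fun z : Qi i => exists c t, D c /\ T t /\ phi (s t) i * (phi (s c) i * z) = 0.
have Iid : ideal I.
  split; [split; [|split]|].
  - by exists 1, 1; rewrite !mulr0.
  - move=> z1 z2 [c1 [t1 [Dc1 [Tt1 e1]]]] [c2 [t2 [Dc2 [Tt2 e2]]]].
    have [u1 [h1 h2]] := hDu Dc1.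
    have [d [b [Dd eb]]] := hfrac (s c2 * u1).
    have ec : s (d * c2) = s b * s c1 by rewrite rmorphM -eb -!mulrA h2 mulr1.
    have [t' [b' [Tt' e']]] := TO b t1 Tt1.
    have [t'' [d' [Tt'' e'']]] := TO d t2 Tt2.
    have [u [v [Tu euv]]] := TO t' t'' Tt''.
    exists (d * c2), (u * t'); split; first exact: hDM.
    split; first exact: TM.
    rewrite mulrBr mulrBr.
    have -> : phi (s (u * t')) i * (phi (s (d * c2)) i * z1) = 0.
      rewrite ec (phiM Hphi) pM -!mulrA (pO e') e1 !mulr0 //.
    have -> : phi (s (u * t')) i * (phi (s (d * c2)) i * z2) = 0.
      rewrite euv !pM -!mulrA (pO e'') e2 !mulr0 //.
    by rewrite subrr.
  - move=> x z [c [t [Dc [Tt e]]]].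
    have [c1 [a [Dc1 ea]]] := hfrac (lift_at Hphi x).
    have ea' : phi (s c1) i * x = phi (s a) i by rewrite -ea (phiM Hphi) lift_at_eq.
    have [u [h1 h2]] := hDu Dc.
    have [c' [a'' [Dc' ea'']]] := hfrac (s a * u).
    have e2 : c' * a = a'' * c.
      apply/eqP; rewrite -subr_eq0; apply/eqP; apply: hinj.
      by rewrite rmorphB !rmorphM -ea'' -!mulrA h2 mulr1 subrr.
    have [t' [a3 [Tt' e3]]] := TO a'' t Tt.
    exists (c' * c1), t'; split; first exact: hDM.
    split=> //.
    rewrite pM -!mulrA (mulrA _ x) ea' (pO e2) (pO e3) e !mulr0 //.
  - move=> r z [c [t [Dc [Tt e]]]]; exists c, t; split=> //; split=> //.
    by rewrite !mulrA -(mulrA _ _ z) e mul0r.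
have lreg : forall t y, T t -> phi (s t) i * y = 0 -> y = 0.
  case: (HQi i) => [[_ hs] _].
  case: (hs I Iid) => [h0|hall].
    by move=> t y Tt e; apply: h0; exists 1, t; rewrite p1 mul1r.
  have [c [t [Dc [Tt e]]]] := hall 1.
  exfalso; apply: (hi t Tt); apply: (unit_canr (pD i Dc)).
  by rewrite -[_ * _]mulr1 -mulrA.
move=> t Tt; apply: artin_unit; first by case: (HQi i).
move=> z ez.
have [c [a [Dc ea]]] := hfrac (lift_at Hphi z).
have ea' : phi (s c) i * z = phi (s a) i by rewrite -ea (phiM Hphi) lift_at_eq.
have [d [b [Dd eb]]] := hfrac (lift_at Hphi (1 : Qi i) * s a).
have hbt : b * t = 0.
  apply: hinj; apply: (phi_eq0 Hphi) => j.
  rewrite rmorphM -eb !(phiM Hphi); case: (eqVneq j i) => [->|ne].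
    by rewrite lift_at_eq mul1r -ea' -!mulrA ez !mulr0.
  by rewrite lift_at_neq // mul0r mulr0 mul0r.
have [t2 [Tt2 e2]] := TD b t Tt hbt.
have pb : phi (s b) i = 0 by apply: (lreg t2) => //; rewrite -pM e2 rmorph0 (phi0 Hphi).
have pa : phi (s a) i = 0.
  apply: (unit_canl (pD i Dd)); move: pb.
  by rewrite -eb !(phiM Hphi) lift_at_eq mul1r.
by apply: (unit_canl (pD i Dc)); rewrite ea'.
Qed.

Lemma den_sub (T : A -> Prop) : left_den T -> exists i, forall a, T a -> SA i a.
Proof.
move=> hT.
case: (classic (exists i, forall t, T t -> phi (s t) i <> 0)) => [[i hi]|hno].
  by exists i; apply: good_unit.
exfalso.
have hz : forall i, exists t, T t /\ phi (s t) i = 0.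
  move=> i; apply: NNPP => h; apply: hno; exists i => t Tt e; apply: h; by exists t.
move: (hT) => [[[T1 [T0 TM]] _] _].
have hk : forall k, exists t, T t /\ forall j : 'I_n, (j < k)%N -> phi (s t) j = 0.
  elim=> [|k [t [Tt ht]]]; first by exists 1; split.
  case: (ltnP k n) => [lkn|lnk].
    have [t' [Tt' e']] := hz (Ordinal lkn).
    exists (t' * t); split; first exact: TM.
    move=> j; rewrite ltnS leq_eqVlt => /orP [/eqP ej|ljk].
      have -> : j = Ordinal lkn by apply: val_inj.
      by rewrite pM e' mul0r.
    by rewrite pM ht // mulr0.
  exists t; split=> // j _; apply: ht; exact: (leq_trans (ltn_ord j)).
have [t [Tt ht]] := hk n.
apply: T0; suff <- : t = 0 by [].
by apply: hinj; apply: (phi_eq0 Hphi) => j; apply: ht.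
Qed.

Lemma maxSA (T : A -> Prop) : maxDen_l T <-> exists i, same_subset T (SA i).
Proof.
split.
  move=> [hT hmax]; have [i hi] := den_sub hT.
  exists i => x; split; first exact: hi.
  exact: (hmax _ (SA_den i) hi).
move=> [i hi]; split.
  apply: (den_same (A := SA i)); last exact: SA_den.
  by move=> x; split => /hi.
move=> U hU hTU; have [j hj] := den_sub hU.
have ij : i = j.
  by apply: SA_incl => a /hi /hTU /hj.
by move=> x /hj; rewrite -ij => /hi.
Qed.

End Loc.


Section F.
Variables (R Q : pzRingType) (sigma : {rmorphism R -> Q}) (n : nat) (Qi : 'I_n -> pzRingType).
Variable phi : Q -> forall i, Qi i.
Variable Hphi : ring_iso_prod phi.
Variable i : 'I_n.
Definition fproj (H : ring_iso_prod phi) (r : R) : Qi i := phi (sigma r) i.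
Lemma fproj_zmod : zmod_morphism (fproj Hphi).
Proof. by move=> a b; rewrite /fproj rmorphB (phiB Hphi). Qed.
Lemma fproj_mon : monoid_morphism (fproj Hphi).
Proof. by split; [rewrite /fproj rmorph1 (phi1 Hphi) | move=> a b; rewrite /fproj rmorphM (phiM Hphi)]. Qed.
HB.instance Definition _ := GRing.isZmodMorphism.Build R (Qi i) (fproj Hphi) fproj_zmod.
HB.instance Definition _ := GRing.isMonoidMorphism.Build R (Qi i) (fproj Hphi) fproj_mon.
End F.

Definition fprojR (R Q : pzRingType) (sigma : {rmorphism R -> Q}) n (Qi : 'I_n -> pzRingType) phi
  (H : ring_iso_prod phi) i : {rmorphism R -> Qi i} := @fproj R Q sigma n Qi phi i H.


Unset Implicit Arguments.

Theorem corollary3p13 (R Q : pzRingType) (sigma : {rmorphism R -> Q})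
  (n : nat) (Qi : 'I_n -> pzRingType) (phi : Q -> forall i, Qi i) :
  semiprime R -> left_Goldie R ->
  is_classical_left_quotient sigma ->
  ring_iso_prod phi ->
  (forall i, simple_Artinian (Qi i)) ->
  let S' := fun (i : 'I_n) (q : Q) => is_unit (phi q i) in
  let S := fun (i : 'I_n) => preimage_of sigma (S' i) in
  (* (1) *)
  (forall T : R -> Prop, maxDen_l T -> forall c, regular c -> T c) /\
  (* (2) *)
  (forall T : R -> Prop, maxDen_l T <-> exists i, same_subset T (S i)) /\
  (forall T : Q -> Prop, maxDen_l T <-> exists i, same_subset T (S' i)) /\
  (forall T : R -> Prop, maxDen_l T ->
     maxDen_l (tilde sigma T) /\ same_subset (preimage_of sigma (tilde sigma T)) T) /\
  (forall T : Q -> Prop, maxDen_l T ->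
     maxDen_l (preimage_of sigma T) /\ same_subset (tilde sigma (preimage_of sigma T)) T) /\
  (* (3) *)
  (forall i, exists f : {rmorphism R -> Qi i}, is_left_localization (S i) f).
Proof.
move=> _ _ [hu [hf hk]] Hphi HQi S' S.
have hD1 : regular (1 : R) by split=> r; rewrite ?mul1r ?mulr1.
have hDM : forall a b : R, regular a -> regular b -> regular (a * b).
  move=> a b [ha1 ha2] [hb1 hb2]; split=> r.
    by rewrite -mulrA => /ha1 /hb1.
  by rewrite mulrA => /hb2 /ha2.
have hinj : forall a : R, sigma a = 0 -> a = 0.
  by move=> a /(hk a) [c [[hc _] e]]; apply: hc.
have maxR := maxSA Hphi HQi hD1 hDM hu hf hinj.
have maxQ : forall T : Q -> Prop, maxDen_l T <-> exists i, same_subset T (S' i).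
  apply: (maxSA Hphi HQi (s := idfun) (D := fun q => q = 1)) => //.
  - by move=> a b -> ->; rewrite mulr1.
  - by move=> c ->; apply: unit1.
  - by move=> q; exists 1, q; rewrite mul1r.
have tildeE : forall (U : R -> Prop) i, same_subset U (S i) ->
    same_subset (tilde sigma U) (S' i).
  move=> U i hU q; split.
    elim=> [|x y hx _ IH]; first by rewrite /S' (phi1 Hphi); apply: unit1.
    rewrite /S' (phiM Hphi); apply: unit_mul => //.
    case: hx => [[s0 [Us ->]]|[c [rc [e1 e2]]]]; first exact/hU.
    by exists (phi (sigma c) i); rewrite -!(phiM Hphi) e1 e2 (phi1 Hphi).
  move=> hq; have [c [a [rc ea]]] := hf q.
  have [y [y1 y2]] := hu c rc.
  have -> : q = y * (sigma a * 1) by rewrite mulr1 -ea mulrA y2 mul1r.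
  apply: gm_mul; first by right; exists c.
  apply: gm_mul; last exact: gm_one.
  left; exists a; split=> //; apply/hU.
  rewrite /S /preimage_of /S' -ea (phiM Hphi); apply: unit_mul => //.
  by apply: (unit_comp Hphi); apply: hu.
split.
  move=> T /maxR [i hi] c hc; apply/hi.
  by apply: (unit_comp Hphi); apply: hu.
split; first exact: maxR.
split; first exact: maxQ.
split.
  move=> T /maxR [i hi]; have ht := tildeE T i hi; split.
    by apply/maxQ; exists i.
  by move=> x; split=> [/ht /hi|/hi /ht].
split.
  move=> T /maxQ [i hi].
  have hp : same_subset (preimage_of sigma T) (S i) by move=> x; exact: hi.
  split; first by apply/maxR; exists i.
  move=> q; split=> [/(tildeE _ _ hp) /hi|/hi /(tildeE _ _ hp)] //.
move=> i; exists (fprojR sigma Hphi i); split; last split.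
- by move=> s0.
- move=> q; have [c [a [rc ea]]] := hf (lift_at Hphi q).
  exists c, a; split; first by apply: (unit_comp Hphi); apply: hu.
  by rewrite /= /fproj -ea (phiM Hphi) lift_at_eq.
- move=> r; split.
    by move=> h; apply: (kill Hphi hu hf hinj); exact: h.
  move=> [s0 [hs e]]; apply: (unit_canl hs).
  by rewrite -(phiM Hphi) -rmorphM e rmorph0 (phi0 Hphi).
Qed.
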